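(* Assume the hypotheses of the existence theorem stated in the context, let $\alpha=\max\{\|H(X)\|:X\in N_\varepsilon(\mathcal P)\}$, and fix $\mu\ge\dfrac{\Lambda+(L_0+L_1)\alpha}{1-C_0-C_1}$. Let $\delta>0$ and let $W=(w_1,\dots,w_n)\in C^1([-\delta,\delta];\mathbb R^n)$ with $w_1([-\delta,\delta])\subseteq[-\delta,\delta]$ satisfy $W'(t)=H(t;W(t),W(w_1(t));W'(t),W'(w_1(t)))$ for $|t|\le\delta$, $W(0)=0$, $W'(0)=P$, and $(t;W(t),W(w_1(t));W'(t),W'(w_1(t)))\in N_\varepsilon(\mathcal P)$ for $|t|\le\delta$. Then $W\in\mathcal C(\delta)$.
   Context: Setting (existence theorem hypotheses): $\|\cdot\|$ is a norm on $\mathbb R^n$; $H=(h_1,\dots,h_n)$ is continuous from an open subset of $\mathbb R^{4n+1}$ to $\mathbb R^n$, written $H(t;\zeta^0,\zeta^1;\xi^0,\xi^1)$; $P=(p_1,\dots,p_n)$ satisfies $P=H(0;\mathbf0,\mathbf0;P,P)$ and $|p_1|\le1$; $\mathcal P=(0;\mathbf0,\mathbf0;P,P)$; $N_\varepsilon(\mathcal P)=\{|t|+\|\zeta^0\|+\|\zeta^1\|+\|\xi^0-P\|+\|\xi^1-P\|\le\varepsilon\}$ lies in the domain, and on it: $H$ is $\Lambda$-Lipschitz in $t$; $\|H(t;\bar\zeta^0,\bar\zeta^1;\xi^0,\xi^1)-H(t;\zeta^0,\zeta^1;\xi^0,\xi^1)\|\le L_0\|\bar\zeta^0-\zeta^0\|+L_1\|\bar\zeta^1-\zeta^1\|$;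 $\|H(t;\zeta^0,\zeta^1;\bar\xi^0,\bar\xi^1)-H(t;\zeta^0,\zeta^1;\xi^0,\xi^1)\|\le C_0\|\bar\xi^0-\xi^0\|+C_1\|\bar\xi^1-\xi^1\|$ with $C_0+C_1<1$; and $|h_1|\le1$. For $Z=(z_1,\dots,z_n)$ let $V_Z(t)=(t;Z(t),Z(z_1(t));Z'(t),Z'(z_1(t)))$. The set $\mathcal C(\delta)$ consists of all $Z\in C^1([-\delta,\delta];\mathbb R^n)$ such that: $Z(0)=0$, $Z'(0)=P$; $|z_1(t)|\le|t|$; $\|Z(t)-Z(\bar t)\|\le\alpha|t-\bar t|$; $|z_1(t)-z_1(\bar t)|\le|t-\bar t|$; $\|Z'(t)-Z'(\bar t)\|\le\mu|t-\bar t|$; and $V_Z(t)\in N_\varepsilon(\mathcal P)$, for all $t,\bar t\in[-\delta,\delta]$. *)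

(* Defs.v *)
From Stdlib Require Import Reals.
From mathcomp Require Import ssreflect ssrfun ssrbool eqtype ssrnat fintype.
Open Scope R_scope.

Definition Vec (n : nat) := 'I_n -> R.

Definition vzero {n} : Vec n := fun _ => 0.
Definition vsub {n} (x y : Vec n) : Vec n := fun i => x i - y i.
Definition vadd {n} (x y : Vec n) : Vec n := fun i => x i + y i.
Definition vscale {n} (c : R) (x : Vec n) : Vec n := fun i => c * x i.

Definition is_norm {n} (nrm : Vec n -> R) : Prop :=
  (forall x, 0 <= nrm x) /\
  (forall x, nrm x = 0 -> x = vzero) /\
  (forall c x, nrm (vscale c x) = Rabs c * nrm x) /\
  (forall x y, nrm (vadd x y) <= nrm x + nrm y).

(* A point (t; zeta0, zeta1; xi0, xi1) of R^{4n+1} *)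
Definition Pt (n : nat) := (R * Vec n * Vec n * Vec n * Vec n)%type.

Definition dist5 {n} (nrm : Vec n -> R) (X Y : Pt n) : R :=
  let '(t, a, b, c, d) := X in
  let '(t', a', b', c', d') := Y in
  Rabs (t - t') + nrm (vsub a a') + nrm (vsub b b') + nrm (vsub c c')
  + nrm (vsub d d').

Definition is_open {n} (nrm : Vec n -> R) (D : Pt n -> Prop) : Prop :=
  forall X, D X -> exists r, 0 < r /\ forall Y, dist5 nrm X Y < r -> D Y.

Definition continuous_on {n} (nrm : Vec n -> R) (D : Pt n -> Prop)
  (H : Pt n -> Vec n) : Prop :=
  forall X, D X -> forall e, 0 < e -> exists d, 0 < d /\
    forall Y, D Y -> dist5 nrm X Y < d -> nrm (vsub (H Y) (H X)) < e.

Definition calP {n} (P : Vec n) : Pt n := (0, vzero, vzero, P, P).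

Definition in_N {n} (nrm : Vec n -> R) (eps : R) (P : Vec n) (X : Pt n) : Prop :=
  dist5 nrm X (calP P) <= eps.

Definition deriv_within (a b : R) (f : R -> R) (t l : R) : Prop :=
  forall e, 0 < e -> exists d, 0 < d /\
    forall h, h <> 0 -> Rabs h < d -> a <= t + h <= b ->
      Rabs ((f (t + h) - f t) / h - l) < e.

Definition cont_within (a b : R) (f : R -> R) (t : R) : Prop :=
  forall e, 0 < e -> exists d, 0 < d /\
    forall s, a <= s <= b -> Rabs (s - t) < d -> Rabs (f s - f t) < e.

Definition C1_on {n} (delta : R) (Z Z' : R -> Vec n) : Prop :=
  forall t, - delta <= t <= delta -> forall i : 'I_n,
    deriv_within (- delta) delta (fun s => Z s i) t (Z' t i) /\
    cont_within (- delta) delta (fun s => Z' s i) t.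

(* V_Z(t) = (t; Z(t), Z(z_1(t)); Z'(t), Z'(z_1(t))), i1 the first index *)
Definition VZ {n} (i1 : 'I_n) (Z Z' : R -> Vec n) (t : R) : Pt n :=
  (t, Z t, Z (Z t i1), Z' t, Z' (Z t i1)).

Definition in_calC {n} (nrm : Vec n -> R) (i1 : 'I_n) (eps : R) (P : Vec n)
  (alpha mu delta : R) (Z Z' : R -> Vec n) : Prop :=
  C1_on delta Z Z' /\
  Z 0 = vzero /\ Z' 0 = P /\
  (forall t, - delta <= t <= delta -> Rabs (Z t i1) <= Rabs t) /\
  (forall t tb, - delta <= t <= delta -> - delta <= tb <= delta ->
     nrm (vsub (Z t) (Z tb)) <= alpha * Rabs (t - tb)) /\
  (forall t tb, - delta <= t <= delta -> - delta <= tb <= delta ->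
     Rabs (Z t i1 - Z tb i1) <= Rabs (t - tb)) /\
  (forall t tb, - delta <= t <= delta -> - delta <= tb <= delta ->
     nrm (vsub (Z' t) (Z' tb)) <= mu * Rabs (t - tb)) /\
  (forall t, - delta <= t <= delta -> in_N nrm eps P (VZ i1 Z Z' t)).

(* Main.v *)
Require Import Defs.
From Stdlib Require Import Reals Lra Classical FunctionalExtensionality.
From mathcomp Require Import ssreflect ssrfun ssrbool eqtype ssrnat seq fintype.
Open Scope R_scope.

Section Vecs.
Variable n : nat.
Variable nrm : Vec n -> R.
Hypothesis Hnrm : is_norm nrm.

Lemma nrm_ge0 x : 0 <= nrm x. Proof. by case: Hnrm. Qed.
Lemma nrm_scale c x : nrm (vscale c x) = Rabs c * nrm x.
Proof. by case: Hnrm => _ [_ [H _]]. Qed.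
Lemma nrm_tri x y : nrm (vadd x y) <= nrm x + nrm y.
Proof. by case: Hnrm => _ [_ [_ H]]. Qed.
Lemma nrm_eq0 x : nrm x = 0 -> x = vzero.
Proof. by case: Hnrm => _ [H _]; apply: H. Qed.
Lemma nrm_zero : nrm vzero = 0.
Proof.
have -> : (vzero : Vec n) = vscale 0 vzero.
  by apply: functional_extensionality => i; rewrite /vscale /vzero; ring.
rewrite nrm_scale Rabs_R0; ring.
Qed.
Lemma nrm_sym x y : nrm (vsub x y) = nrm (vsub y x).
Proof.
have -> : vsub x y = vscale (-1) (vsub y x).
  by apply: functional_extensionality => i; rewrite /vscale /vsub; ring.
rewrite nrm_scale Rabs_Ropp Rabs_R1; ring.
Qed.
Lemma nrm_sub_le x y : nrm (vsub x y) <= nrm x + nrm y.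
Proof.
have -> : vsub x y = vadd x (vscale (-1) y).
  by apply: functional_extensionality => i; rewrite /vscale /vsub /vadd; ring.
apply: Rle_trans (nrm_tri _ _) _; rewrite nrm_scale Rabs_Ropp Rabs_R1; lra.
Qed.
Lemma nrm_tri_sub x y z : nrm (vsub z x) <= nrm (vsub z y) + nrm (vsub y x).
Proof.
have -> : vsub z x = vadd (vsub z y) (vsub y x).
  by apply: functional_extensionality => i; rewrite /vsub /vadd; ring.
exact: nrm_tri.
Qed.
Lemma nrm_rev x y z : Rabs (nrm (vsub x z) - nrm (vsub y z)) <= nrm (vsub x y).
Proof.
have h1 := nrm_tri_sub z y x. have h2 := nrm_tri_sub z x y.
rewrite (nrm_sym y x) in h2.
apply: Rabs_le; lra.
Qed.
Lemma chain3 x y1 y2 z k1 k2 k3 :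
  nrm (vsub z y2) <= k3 -> nrm (vsub y2 y1) <= k2 -> nrm (vsub y1 x) <= k1 ->
  nrm (vsub z x) <= k3 + k2 + k1.
Proof.
move=> h3 h2 h1.
have := nrm_tri_sub x y2 z. have := nrm_tri_sub x y1 y2. lra.
Qed.

Definition ei (i : 'I_n) : Vec n := fun j => if j == i then 1 else 0.

Lemma small_list (l : seq 'I_n) : forall e, 0 < e -> exists eta, 0 < eta /\
  forall x : Vec n, (forall i, i \notin l -> x i = 0) ->
    (forall i, Rabs (x i) < eta) -> nrm x < e.
Proof.
elim: l => [|i l IH] e He.
  exists 1; split; first lra.
  move=> x Hx _. have -> : x = vzero.
    by apply: functional_extensionality => j; rewrite Hx.
  by rewrite nrm_zero.
have He2 : 0 < e / 2 by lra.
case: (IH _ He2) => eta1 [Heta1 Hs].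
set ne := nrm (ei i).
have Hne := nrm_ge0 (ei i).
set q := e / (2 * (ne + 1)).
have Hq : q * (2 * (ne + 1)) = e by rewrite /q; field; rewrite /ne; lra.
have Hq0 : 0 < q by rewrite /q; apply: Rdiv_lt_0_compat; rewrite /ne; lra.
exists (Rmin eta1 q); split; first by apply: Rmin_pos.
move=> x Hx Hsm.
pose x' : Vec n := fun j => if j == i then 0 else x j.
have Ex : x = vadd (vscale (x i) (ei i)) x'.
  apply: functional_extensionality => j; rewrite /vadd /vscale /ei /x'.
  case: (eqVneq j i) => [->|_]; ring.
have Hx' : nrm x' < e / 2.
  apply: Hs.
    move=> j Hj; rewrite /x'; case: (eqVneq j i) => // Hji.
    by apply: Hx; rewrite in_cons negb_or Hji Hj.
  move=> j; rewrite /x'; case: (eqVneq j i) => _.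
    rewrite Rabs_R0; lra.
  have := Hsm j; have := Rmin_l eta1 q; lra.
rewrite Ex; apply: Rle_lt_trans (nrm_tri _ _) _.
rewrite nrm_scale -/ne.
have h1 : Rabs (x i) < q by have := Hsm i; have := Rmin_r eta1 q; lra.
have h2 : Rabs (x i) * ne <= q * ne by apply: Rmult_le_compat_r => //; lra.
have h3 : q * ne < e / 2 by nra.
lra.
Qed.

Lemma small e : 0 < e -> exists eta, 0 < eta /\
  forall x : Vec n, (forall i, Rabs (x i) < eta) -> nrm x < e.
Proof.
move=> He; case: (@small_list (ord_enum n) e He) => eta [H1 H2].
exists eta; split => // x Hx; apply: H2 => //.
by move=> i; rewrite mem_ord_enum.
Qed.

Lemma delta_list (Q : 'I_n -> R -> Prop) (l : seq 'I_n) :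
  (forall i, exists d, 0 < d /\ forall h, Rabs h < d -> Q i h) ->
  exists d, 0 < d /\ forall h, Rabs h < d -> forall i, i \in l -> Q i h.
Proof.
move=> HQ; elim: l => [|i l [d [Hd IH]]].
  by exists 1; split; [lra|].
case: (HQ i) => d' [Hd' H'].
exists (Rmin d d'); split; first by apply: Rmin_pos.
move=> h Hh j; rewrite in_cons => /orP [/eqP ->|Hj].
  apply: H'; have := Rmin_r d d'; lra.
apply: IH => //; have := Rmin_l d d'; lra.
Qed.

Lemma delta_all (Q : 'I_n -> R -> Prop) :
  (forall i, exists d, 0 < d /\ forall h, Rabs h < d -> Q i h) ->
  exists d, 0 < d /\ forall h, Rabs h < d -> forall i, Q i h.
Proof.
move=> HQ; case: (@delta_list Q (ord_enum n) HQ) => d [Hd H].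
exists d; split => // h Hh i; apply: H => //; exact: mem_ord_enum.
Qed.

Lemma nderiv delta (W W' : R -> Vec n) (HW : C1_on delta W W') u
  (Hu : - delta <= u <= delta) e (He : 0 < e) :
  exists d, 0 < d /\ forall h, Rabs h < d -> - delta <= u + h <= delta ->
    nrm (vsub (vsub (W (u + h)) (W u)) (vscale h (W' u))) <= e * Rabs h.
Proof.
case: (@small e He) => eta [Heta Hsm].
pose Q i h := h <> 0 -> - delta <= u + h <= delta ->
  Rabs ((W (u + h) i - W u i) / h - W' u i) < eta.
have : forall i, exists d, 0 < d /\ forall h, Rabs h < d -> Q i h.
  move=> i; case: (HW u Hu i) => Hd _.
  case: (Hd eta Heta) => d [Hd0 Hd1]; exists d; split => // h Hh Hh0 Hr.
  exact: Hd1.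
case/delta_all => d [Hd HdQ].
exists d; split => // h Hh Hr.
case: (Req_dec h 0) => [->|Hh0].
  have -> : vsub (vsub (W (u + 0)) (W u)) (vscale 0 (W' u)) = vzero.
    apply: functional_extensionality => i; rewrite /vsub /vscale /vzero Rplus_0_r; ring.
  rewrite nrm_zero Rabs_R0; lra.
pose y : Vec n := fun i => (W (u + h) i - W u i) / h - W' u i.
have -> : vsub (vsub (W (u + h)) (W u)) (vscale h (W' u)) = vscale h y.
  apply: functional_extensionality => i; rewrite /vsub /vscale /y; field; exact: Hh0.
rewrite nrm_scale.
have : nrm y < e by apply: Hsm => i; apply: HdQ.
have := Rabs_pos h. nra.
Qed.

End Vecs.

Lemma creep (g : R -> R) (s t a : R) : s <= t -> 0 <= a -> g s <= 0 ->
  (forall u, s <= u <= t -> forall e, 0 < e -> exists d, 0 < d /\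
     forall v, s <= v <= t -> Rabs (v - u) < d ->
       Rabs (g v - g u) <= (a + e) * Rabs (v - u)) ->
  g t <= a * (t - s).
Proof.
move=> Hst Ha Hgs Hloc.
have key : forall e, 0 < e -> g t <= (a + e) * (t - s) + e.
  move=> e He.
  pose Rf v := (a + e) * (v - s) + e.
  pose E u := s <= u <= t /\ forall v, s <= v <= u -> g v <= Rf v.
  have Es : E s.
    split; first lra. move=> v Hv. have -> : v = s by lra.
    rewrite /Rf. have : (a + e) * (s - s) = 0 by ring. lra.
  have Eb : bound E by exists t => u [[_ ?] _].
  case: (completeness E Eb (ex_intro _ s Es)) => m [Hub Hlub].
  have Hsm : s <= m by apply: Hub.
  have Hmt : m <= t by apply: Hlub => u [[_ ?] _].
  have below : forall v, s <= v < m -> g v <= Rf v.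
    move=> v Hv. apply: NNPP => Hn.
    have : m <= v.
      apply: Hlub => u Eu. apply: Rnot_lt_le => Hvu. apply: Hn.
      case: Eu => _ H. apply: H; lra.
    lra.
  have Rmono : forall v w, v <= w -> Rf v <= Rf w.
    move=> v w Hvw; rewrite /Rf. have : (a + e) * (w - v) >= 0 by nra. nra.
  have atm : g m <= Rf m.
    case: (Req_dec m s) => [->|Hms].
      rewrite /Rf. have : (a + e) * (s - s) = 0 by ring. lra.
    apply: Rnot_lt_le => Hlt.
    set eta := g m - Rf m.
    have Heta : 0 < eta by rewrite /eta; lra.
    case: (Hloc m (conj Hsm Hmt) 1 Rlt_0_1) => d [Hd Hd1].
    set k := Rmin (m - s) (Rmin (d / 2) (eta / (2 * (a + 1)))).
    have Hk0 : 0 < k.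
      apply: Rmin_pos; first lra. apply: Rmin_pos; first lra.
      apply: Rdiv_lt_0_compat; lra.
    have Hk1 : k <= m - s by apply: Rmin_l.
    have Hk2 : k <= d / 2 by apply: Rle_trans (Rmin_r _ _) (Rmin_l _ _).
    have Hk3 : k <= eta / (2 * (a + 1)) by apply: Rle_trans (Rmin_r _ _) (Rmin_r _ _).
    have Hk4 : (a + 1) * k <= eta / 2.
      have -> : eta / 2 = (a + 1) * (eta / (2 * (a + 1))) by field; lra.
      apply: Rmult_le_compat_l; lra.
    have Hv := below (m - k) ltac:(lra).
    have Hvm := Rmono (m - k) m ltac:(lra).
    have := Hd1 (m - k) ltac:(lra).
    have -> : m - k - m = - k by ring.
    rewrite Rabs_Ropp (Rabs_right k); last lra.
    rewrite Rabs_minus_sym => Hab.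
    have := Rle_abs (g m - g (m - k)). rewrite /eta in Hk4 Heta. lra.
  have Em : forall v, s <= v <= m -> g v <= Rf v.
    move=> v Hv. case: (Rle_lt_or_eq_dec v m (proj2 Hv)) => Hvm.
      by apply: below; lra.
    by rewrite Hvm.
  have mt : m = t.
    apply: NNPP => Hne.
    case: (Hloc m (conj Hsm Hmt) e He) => d [Hd Hd1].
    set u := Rmin t (m + d / 2).
    have Hu1 : u <= t by apply: Rmin_l.
    have Hu2 : u <= m + d / 2 by apply: Rmin_r.
    have Hu3 : m < u by rewrite /u; apply: Rmin_glb_lt; lra.
    have Eu : E u.
      split; first lra.
      move=> v Hv. case: (Rle_lt_dec v m) => Hvm; first by apply: Em; lra.
      have := Hd1 v ltac:(lra) ltac:(rewrite Rabs_right; lra).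
      rewrite (Rabs_right (v - m)); last lra.
      move=> Hab. have := Rle_abs (g v - g m).
      have := Em m ltac:(lra). rewrite /Rf. nra.
    have := Hub u Eu. lra.
  apply: Em; lra.
apply: Rnot_lt_le => Hlt.
set e := (g t - a * (t - s)) / (t - s + 2).
have He : 0 < e by apply: Rdiv_lt_0_compat; lra.
have Hee : e * (t - s + 2) = g t - a * (t - s) by rewrite /e; field; lra.
have := key e He. nra.
Qed.

Section Lip.
Variable n : nat.
Variable nrm : Vec n -> R.
Variables (H : Pt n -> Vec n) (P : Vec n) (eps Lam L0 L1 C0 C1 : R).
Hypothesis HLam : forall t tb a b c d,
     in_N nrm eps P (t, a, b, c, d) -> in_N nrm eps P (tb, a, b, c, d) ->
     nrm (vsub (H (tb, a, b, c, d)) (H (t, a, b, c, d))) <= Lam * Rabs (tb - t).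
Hypothesis HL : forall t a b ab bb c d,
     in_N nrm eps P (t, a, b, c, d) -> in_N nrm eps P (t, ab, bb, c, d) ->
     nrm (vsub (H (t, ab, bb, c, d)) (H (t, a, b, c, d)))
       <= L0 * nrm (vsub ab a) + L1 * nrm (vsub bb b).
Hypothesis HC : forall t a b c d cb db,
     in_N nrm eps P (t, a, b, c, d) -> in_N nrm eps P (t, a, b, cb, db) ->
     nrm (vsub (H (t, a, b, cb, db)) (H (t, a, b, c, d)))
       <= C0 * nrm (vsub cb c) + C1 * nrm (vsub db d).
Hypothesis Hnrm : is_norm nrm.

Ltac ordt Y1 Y2 S1 S2 S3 :=
  solve [eapply Rle_trans;
   [eapply (@chain3 n nrm Hnrm _ (H Y1) (H Y2)); [apply: S3 | apply: S2 | apply: S1];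
    rewrite /in_N /dist5 /calP /=; lra
   | lra]].

Lemma HLip t a b c d t' a' b' c' d' :
  in_N nrm eps P (t, a, b, c, d) -> in_N nrm eps P (t', a', b', c', d') ->
  nrm (vsub (H (t', a', b', c', d')) (H (t, a, b, c, d))) <=
  Lam * Rabs (t' - t) + (L0 * nrm (vsub a' a) + L1 * nrm (vsub b' b))
  + (C0 * nrm (vsub c' c) + C1 * nrm (vsub d' d)).
Proof.
move=> X Y; move: (X) (Y); rewrite /in_N /dist5 /calP /= => X' Y'.
case: (Rle_dec (Rabs (t' - 0) - Rabs (t - 0))
   (nrm (vsub a' vzero) + nrm (vsub b' vzero) - nrm (vsub a vzero) - nrm (vsub b vzero)));
case: (Rle_dec (nrm (vsub a' vzero) + nrm (vsub b' vzero) - nrm (vsub a vzero) - nrm (vsub b vzero))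
   (nrm (vsub c' P) + nrm (vsub d' P) - nrm (vsub c P) - nrm (vsub d P)));
case: (Rle_dec (Rabs (t' - 0) - Rabs (t - 0))
   (nrm (vsub c' P) + nrm (vsub d' P) - nrm (vsub c P) - nrm (vsub d P))) => h1 h2 h3;
first [ ordt (t', a, b, c, d) (t', a', b', c, d) HLam HL HC
      | ordt (t', a, b, c, d) (t', a, b, c', d') HLam HC HL
      | ordt (t, a', b', c, d) (t', a', b', c, d) HL HLam HC
      | ordt (t, a', b', c, d) (t, a', b', c', d') HL HC HLam
      | ordt (t, a, b, c', d') (t', a, b, c', d') HC HLam HL
      | ordt (t, a, b, c', d') (t, a', b', c', d') HC HL HLam ].
Qed.
End Lip.

Lemma vsub_self n (x : Vec n) : vsub x x = vzero.
Proof. by apply: functional_extensionality => i; rewrite /vsub /vzero; ring. Qed.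
Lemma vsub_zero n (x : Vec n) : vsub x vzero = x.
Proof. by apply: functional_extensionality => i; rewrite /vsub /vzero; ring. Qed.
Lemma vsub_addP n (P x : Vec n) : vsub (vadd P x) P = x.
Proof. by apply: functional_extensionality => i; rewrite /vsub /vadd; ring. Qed.

Theorem lemma4p5
  (n : nat) (hn : (0 < n)%N)
  (nrm : Vec n -> R) (Hnrm : is_norm nrm)
  (D : Pt n -> Prop) (HDopen : is_open nrm D)
  (H : Pt n -> Vec n) (HHcont : continuous_on nrm D H)
  (P : Vec n) (eps Lam L0 L1 C0 C1 : R)
  (HP : P = H (calP P))
  (Hp1 : Rabs (P (Ordinal hn)) <= 1)
  (Heps : 0 < eps)
  (HND : forall X, in_N nrm eps P X -> D X)
  (HLam : forall t tb a b c d,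
     in_N nrm eps P (t, a, b, c, d) -> in_N nrm eps P (tb, a, b, c, d) ->
     nrm (vsub (H (tb, a, b, c, d)) (H (t, a, b, c, d))) <= Lam * Rabs (tb - t))
  (HL : forall t a b ab bb c d,
     in_N nrm eps P (t, a, b, c, d) -> in_N nrm eps P (t, ab, bb, c, d) ->
     nrm (vsub (H (t, ab, bb, c, d)) (H (t, a, b, c, d)))
       <= L0 * nrm (vsub ab a) + L1 * nrm (vsub bb b))
  (HC : forall t a b c d cb db,
     in_N nrm eps P (t, a, b, c, d) -> in_N nrm eps P (t, a, b, cb, db) ->
     nrm (vsub (H (t, a, b, cb, db)) (H (t, a, b, c, d)))
       <= C0 * nrm (vsub cb c) + C1 * nrm (vsub db d))
  (HC01 : C0 + C1 < 1)
  (Hh1 : forall X, in_N nrm eps P X -> Rabs (H X (Ordinal hn)) <= 1)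
  (alpha : R)
  (Halpha_ub : forall X, in_N nrm eps P X -> nrm (H X) <= alpha)
  (Halpha_att : exists X, in_N nrm eps P X /\ nrm (H X) = alpha)
  (mu : R)
  (Hmu : (Lam + (L0 + L1) * alpha) / (1 - C0 - C1) <= mu)
  (delta : R) (Hdelta : 0 < delta)
  (W W' : R -> Vec n)
  (HW : C1_on delta W W')
  (Hw1 : forall t, - delta <= t <= delta ->
     - delta <= W t (Ordinal hn) <= delta)
  (Hode : forall t, - delta <= t <= delta ->
     W' t = H (VZ (Ordinal hn) W W' t))
  (HW0 : W 0 = vzero) (HW'0 : W' 0 = P)
  (HWN : forall t, - delta <= t <= delta ->
     in_N nrm eps P (VZ (Ordinal hn) W W' t)) :
  in_calC nrm (Ordinal hn) eps P alpha mu delta W W'.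
Proof.
set i1 := Ordinal hn.
have Hnn := @nrm_ge0 n nrm Hnrm.
have Ha0 : 0 <= alpha by case: Halpha_att => X [_ <-]; apply: Hnn.
have HW'a : forall u, - delta <= u <= delta -> nrm (W' u) <= alpha.
  by move=> u Hu; rewrite (Hode u Hu); apply: Halpha_ub; apply: HWN.
have HW'1 : forall u, - delta <= u <= delta -> Rabs (W' u i1) <= 1.
  by move=> u Hu; rewrite (Hode u Hu); apply: Hh1; apply: HWN.
have LipW0 : forall s t, - delta <= s -> s <= t -> t <= delta ->
    nrm (vsub (W t) (W s)) <= alpha * (t - s).
  move=> s t Hs Hst Ht.
  apply: (@creep (fun v => nrm (vsub (W v) (W s))) s t) => //.
    by rewrite vsub_self (@nrm_zero n nrm Hnrm); lra.
  move=> u Hu e He.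
  case: (@nderiv n nrm Hnrm delta W W' HW u ltac:(lra) e He) => d [Hd Hd1].
  exists d; split => // v Hv Hvu.
  have := Hd1 (v - u) Hvu ltac:(lra).
  have -> : u + (v - u) = v by ring.
  move=> Hb.
  apply: Rle_trans; first exact: (@nrm_rev n nrm Hnrm).
  have -> : vsub (W v) (W u) = vadd (vscale (v - u) (W' u))
      (vsub (vsub (W v) (W u)) (vscale (v - u) (W' u))).
    by apply: functional_extensionality => i; rewrite /vsub /vadd /vscale; ring.
  apply: Rle_trans; first exact: (@nrm_tri n nrm Hnrm).
  rewrite (@nrm_scale n nrm Hnrm).
  have := HW'a u ltac:(lra). have := Rabs_pos (v - u). nra.
have LipW : forall t tb, - delta <= t <= delta -> - delta <= tb <= delta ->
    nrm (vsub (W t) (W tb)) <= alpha * Rabs (t - tb).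
  move=> t tb Ht Htb; case: (Rle_dec tb t) => h.
    rewrite Rabs_right; last lra. apply: LipW0; lra.
  rewrite (@nrm_sym n nrm Hnrm) Rabs_left; last lra.
  have -> : - (t - tb) = tb - t by ring. apply: LipW0; lra.
have Lipw0 : forall s t, - delta <= s -> s <= t -> t <= delta ->
    Rabs (W t i1 - W s i1) <= 1 * (t - s).
  move=> s t Hs Hst Ht.
  apply: (@creep (fun v => Rabs (W v i1 - W s i1)) s t) => //; first lra.
    by rewrite Rminus_eq_0 Rabs_R0; lra.
  move=> u Hu e He.
  case: (HW u ltac:(lra) i1) => Hder _.
  case: (Hder e He) => d [Hd Hd1].
  exists d; split => // v Hv Hvu.
  have Hr : Rabs (Rabs (W v i1 - W s i1) - Rabs (W u i1 - W s i1)) <= Rabs (W v i1 - W u i1).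
    have -> : W v i1 - W u i1 = (W v i1 - W s i1) - (W u i1 - W s i1) by ring.
    exact: Rabs_triang_inv2.
  apply: Rle_trans Hr _.
  case: (Req_dec (v - u) 0) => Hvu0.
    have -> : v = u by lra. rewrite Rminus_eq_0 Rabs_R0; have := Rabs_pos (u - u). nra.
  have := Hd1 (v - u) Hvu0 Hvu ltac:(lra).
  have -> : u + (v - u) = v by ring.
  set q := (W v i1 - W u i1) / (v - u) - W' u i1 => Hq.
  have -> : W v i1 - W u i1 = (v - u) * q + (v - u) * W' u i1 by rewrite /q; field.
  apply: Rle_trans; first exact: Rabs_triang.
  rewrite !Rabs_mult.
  have := HW'1 u ltac:(lra). have := Rabs_pos (v - u). nra.
have Lipw : forall t tb, - delta <= t <= delta -> - delta <= tb <= delta ->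
    Rabs (W t i1 - W tb i1) <= Rabs (t - tb).
  move=> t tb Ht Htb; case: (Rle_dec tb t) => h.
    rewrite (Rabs_right (t - tb)); last lra. have := Lipw0 tb t; lra.
  rewrite Rabs_minus_sym (Rabs_minus_sym t tb) (Rabs_right (tb - t)); last lra. have := Lipw0 t tb; lra.
pose e1 := @ei n i1.
have Hne1 : 0 < nrm e1.
  case: (Hnn e1) => // /esym /(@nrm_eq0 n nrm Hnrm) E.
  have := f_equal (fun f => f i1) E. rewrite /e1 /ei /vzero eqxx. lra.
pose x := vscale (eps / nrm e1) e1.
have Nx : nrm x = eps.
  rewrite /x (@nrm_scale n nrm Hnrm) Rabs_right; first by field; lra.
  apply: Rle_ge; apply: Rlt_le; apply: Rdiv_lt_0_compat; lra.
have Nz : nrm (vsub (@vzero n) vzero) = 0 by rewrite vsub_self (@nrm_zero n nrm Hnrm).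
have NP : nrm (vsub P P) = 0 by rewrite vsub_self (@nrm_zero n nrm Hnrm).
have Nxz : nrm (vsub x vzero) = eps by rewrite vsub_zero.
have NPx : nrm (vsub (vadd P x) P) = eps by rewrite vsub_addP.
have Hb0 : in_N nrm eps P (0, vzero, vzero, P, P).
  rewrite /in_N /dist5 /calP /= Nz NP Rminus_0_r Rabs_R0; lra.
have HL0 : 0 <= L0.
  have := HL 0 vzero vzero x vzero P P Hb0
    ltac:(rewrite /in_N /dist5 /calP /= Nz NP Nxz Rminus_0_r Rabs_R0; lra).
  rewrite Nxz Nz. have := Hnn (vsub (H (0, x, vzero, P, P)) (H (0, vzero, vzero, P, P))). nra.
have HL1 : 0 <= L1.
  have := HL 0 vzero vzero vzero x P P Hb0
    ltac:(rewrite /in_N /dist5 /calP /= Nz NP Nxz Rminus_0_r Rabs_R0; lra).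
  rewrite Nxz Nz. have := Hnn (vsub (H (0, vzero, x, P, P)) (H (0, vzero, vzero, P, P))). nra.
have HC0 : 0 <= C0.
  have := HC 0 vzero vzero P P (vadd P x) P Hb0
    ltac:(rewrite /in_N /dist5 /calP /= Nz NP NPx Rminus_0_r Rabs_R0; lra).
  rewrite NPx NP. have := Hnn (vsub (H (0, vzero, vzero, vadd P x, P)) (H (0, vzero, vzero, P, P))). nra.
have HC1 : 0 <= C1.
  have := HC 0 vzero vzero P P P (vadd P x) Hb0
    ltac:(rewrite /in_N /dist5 /calP /= Nz NP NPx Rminus_0_r Rabs_R0; lra).
  rewrite NPx NP. have := Hnn (vsub (H (0, vzero, vzero, P, vadd P x)) (H (0, vzero, vzero, P, P))). nra.
have HLam0 : 0 <= Lam.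
  have := HLam 0 eps vzero vzero P P Hb0
    ltac:(rewrite /in_N /dist5 /calP /= Nz NP Rminus_0_r Rabs_right; lra).
  rewrite Rminus_0_r Rabs_right; last lra.
  have := Hnn (vsub (H (eps, vzero, vzero, P, P)) (H (0, vzero, vzero, P, P))). nra.
have LipW' : forall t tb, - delta <= t <= delta -> - delta <= tb <= delta ->
    nrm (vsub (W' t) (W' tb)) <= mu * Rabs (t - tb).
  move=> t tb Ht Htb. set r := Rabs (t - tb).
  have Hr0 : 0 <= r by apply: Rabs_pos.
  pose E y := exists u v, - delta <= u <= delta /\ - delta <= v <= delta /\
     Rabs (u - v) <= r /\ y = nrm (vsub (W' u) (W' v)).
  have Eb : bound E.
    exists (2 * alpha) => y [u [v [Hu [Hv [_ ->]]]]].
    have := @nrm_sub_le n nrm Hnrm (W' u) (W' v). have := HW'a u Hu. have := HW'a v Hv. lra.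
  have Ene : exists y, E y.
    by exists (nrm (vsub (W' t) (W' tb))); exists t, tb; do 3 (split => //); apply: Rle_refl.
  case: (completeness E Eb Ene) => g [Hub Hlub].
  set K := (Lam + (L0 + L1) * alpha) * r.
  have key : forall y, E y -> y <= K + (C0 + C1) * g.
    move=> y [u [v [Hu [Hv [Huv ->]]]]].
    have Hx1 : nrm (vsub (W' u) (W' v)) <= g.
      by apply: Hub; exists u, v; do 3 (split => //).
    have Hw1u := Hw1 u Hu. have Hw1v := Hw1 v Hv.
    have Hx2 : nrm (vsub (W' (W u i1)) (W' (W v i1))) <= g.
      apply: Hub; exists (W u i1), (W v i1); do 2 (split => //); split => //.
      apply: Rle_trans (Lipw u v Hu Hv) Huv.
    have a1 : nrm (vsub (W u) (W v)) <= alpha * r.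
      apply: Rle_trans (LipW u v Hu Hv) _. by apply: Rmult_le_compat_l.
    have a2 : nrm (vsub (W (W u i1)) (W (W v i1))) <= alpha * r.
      apply: Rle_trans (LipW _ _ Hw1u Hw1v) _. apply: Rmult_le_compat_l => //.
      apply: Rle_trans (Lipw u v Hu Hv) Huv.
    have HH := @HLip n nrm H P eps Lam L0 L1 C0 C1 HLam HL HC Hnrm
      v (W v) (W (W v i1)) (W' v) (W' (W v i1))
      u (W u) (W (W u i1)) (W' u) (W' (W u i1)) (HWN v Hv) (HWN u Hu).
    have b0 : Lam * Rabs (u - v) <= Lam * r by apply: Rmult_le_compat_l.
    have b1 : L0 * nrm (vsub (W u) (W v)) <= L0 * (alpha * r) by apply: Rmult_le_compat_l.
    have b2 : L1 * nrm (vsub (W (W u i1)) (W (W v i1))) <= L1 * (alpha * r)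
      by apply: Rmult_le_compat_l.
    have b3 : C0 * nrm (vsub (W' u) (W' v)) <= C0 * g by apply: Rmult_le_compat_l.
    have b4 : C1 * nrm (vsub (W' (W u i1)) (W' (W v i1))) <= C1 * g
      by apply: Rmult_le_compat_l.
    have Eq : nrm (vsub (W' u) (W' v)) =
      nrm (vsub (H (u, W u, W (W u i1), W' u, W' (W u i1)))
                (H (v, W v, W (W v i1), W' v, W' (W v i1)))).
      by rewrite {1}(Hode u Hu) {1}(Hode v Hv).
    rewrite Eq. rewrite /K. lra.
  have Hg : g <= K + (C0 + C1) * g by apply: Hlub => y Ey; apply: key.
  have Hmu' : Lam + (L0 + L1) * alpha <= mu * (1 - C0 - C1).
    have Hc : 0 < 1 - C0 - C1 by lra.
    have := Rmult_le_compat_r (1 - C0 - C1) _ _ (Rlt_le _ _ Hc) Hmu.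
    have -> : (Lam + (L0 + L1) * alpha) / (1 - C0 - C1) * (1 - C0 - C1)
      = Lam + (L0 + L1) * alpha by field; lra.
    done.
  have HgK : g * (1 - C0 - C1) <= mu * r * (1 - C0 - C1).
    have : K <= mu * (1 - C0 - C1) * r by rewrite /K; apply: Rmult_le_compat_r.
    lra.
  have Hgm : g <= mu * r.
    apply: Rmult_le_reg_r HgK; lra.
  apply: Rle_trans Hgm.
  by apply: Hub; exists t, tb; do 3 (split => //); apply: Rle_refl.
rewrite /in_calC; split => //; split => //; split => //.
split.
  move=> t Ht. have := Lipw t 0 Ht ltac:(lra).
  by rewrite HW0 /vzero Rminus_0_r Rminus_0_r.
split; [exact: LipW|split; [exact: Lipw|split; [exact: LipW'|exact: HWN]]].
Qed.
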